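(* Let $\beta=(\beta_n)_{n\ge0}$ be a sequence of positive numbers with $\liminf_n\beta_n^{1/n}\ge1$. If for some $a\in(0,1)$ the map $T_a$ induces a bounded composition operator $C_{T_a}$ on $H^2(\beta)$, then $\beta$ has a polynomial minoration.
   Context: $H^2(\beta)$ is the Hilbert space of analytic functions $f(z)=\sum_{n\ge0}a_nz^n$ on the unit disk $\mathbb D$ with $\|f\|^2=\sum_{n\ge0}|a_n|^2\beta_n<\infty$. For $a\in\mathbb D$, $T_a(z)=\frac{a+z}{1+\bar a z}$, and $C_{T_a}f=f\circ T_a$. $\beta$ has a polynomial minoration if there are constants $\delta,\alpha>0$ with $\beta_n\ge\delta n^{-\alpha}$ for all integers $n\ge1$. *)

(* Defs.v *)
From Stdlib Require Import Reals.
From Coquelicot Require Import Coquelicot.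
Open Scope R_scope.

Definition Ta (a : C) (z : C) : C := ((a + z) / (1 + Cconj a * z))%C.

Definition in_H2 (beta : nat -> R) (c : nat -> C) : Prop :=
  ex_series (fun n => (Cmod (c n)) ^ 2 * beta n).

Definition H2norm (beta : nat -> R) (c : nat -> C) : R :=
  sqrt (Series (fun n => (Cmod (c n)) ^ 2 * beta n)).

Definition represents (c : nat -> C) (f : C -> C) : Prop :=
  forall z : C, Cmod z < 1 -> is_pseries c z (f z).

Definition bounded_comp_Ta (beta : nat -> R) (a : C) : Prop :=
  exists M : R, forall (c : nat -> C) (f : C -> C),
    in_H2 beta c -> represents c f ->
    exists d : nat -> C, in_H2 beta d /\ represents d (fun z => f (Ta a z)) /\
      H2norm beta d <= M * H2norm beta c.

Definition poly_minoration (beta : nat -> R) : Prop :=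
  exists delta alpha : R, 0 < delta /\ 0 < alpha /\
    forall n : nat, (1 <= n)%nat -> beta n >= delta * Rpower (INR n) (- alpha).

(* Main.v *)
Require Import Defs.
From Stdlib Require Import Reals.
From Coquelicot Require Import Coquelicot.
Open Scope R_scope.
From Stdlib Require Import Lia Lra.

Section Single.
Context {G : AbelianMonoid} (u : nat -> G) (n : nat) (Hu : forall k, k <> n -> u k = zero).
Lemma sum_single_lt : forall m, (m < n)%nat -> sum_n u m = zero.
Proof.
  induction m; intros H.
  - rewrite sum_O; apply Hu; lia.
  - rewrite sum_Sn, IHm by lia. rewrite Hu by lia. apply plus_zero_l.
Qed.
Lemma sum_single_ge : forall m, (n <= m)%nat -> sum_n u m = u n.
Proof.
  induction m; intros H.
  - rewrite sum_O. replace n with 0%nat by lia. reflexivity.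
  - destruct (Nat.eq_dec n (S m)) as [Hn|Hn].
    + rewrite sum_Sn, sum_single_lt by lia. rewrite <- Hn. apply plus_zero_l.
    + rewrite sum_Sn, IHm by lia. rewrite (Hu (S m)) by lia. apply plus_zero_r.
Qed.
End Single.

Lemma is_series_single {K : AbsRing} {V : NormedModule K} (u : nat -> V) n :
  (forall k, k <> n -> u k = zero) -> is_series u (u n).
Proof.
  intros Hu. unfold is_series.
  apply filterlim_ext_loc with (fun _ => u n).
  - exists n. intros m Hm. symmetry. apply sum_single_ge; auto.
  - apply filterlim_const.
Qed.

Definition ind (n k : nat) : C := if Nat.eqb k n then 1%C else 0%C.

Lemma represents_ind n : represents (ind n) (fun z => pow_n z n).
Proof.
  intros z _. unfold is_pseries.
  replace (pow_n z n) with (scal (pow_n z n) (ind n n)).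
  - apply (is_series_single (fun k => scal (pow_n z k) (ind n k))).
    intros k Hk. unfold ind. rewrite (proj2 (Nat.eqb_neq k n) Hk).
    exact (scal_zero_r (pow_n z k)).
  - unfold ind. rewrite Nat.eqb_refl. apply (mult_one_r (K:=C_Ring)).
Qed.

Lemma H2_ind beta n : is_series (fun k => (Cmod (ind n k))^2 * beta k) (beta n).
Proof.
  replace (beta n) with ((Cmod (ind n n))^2 * beta n).
  - apply (is_series_single (fun k => (Cmod (ind n k))^2 * beta k)).
    intros k Hk. unfold ind. rewrite (proj2 (Nat.eqb_neq k n) Hk).
    rewrite Cmod_0. simpl. change (zero : R) with 0. ring.
  - unfold ind. rewrite Nat.eqb_refl, Cmod_1. ring.
Qed.

Lemma pseries_at_0 (d : nat -> C) l : is_pseries d (RtoC 0) l -> l = d 0%nat.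
Proof.
  intros H. unfold is_pseries in H.
  assert (H0 : is_series (fun k => scal (pow_n (RtoC 0) k) (d k)) (scal (pow_n (RtoC 0) 0) (d 0%nat))).
  { apply (is_series_single (fun k => scal (pow_n (RtoC 0) k) (d k))).
    intros k Hk. destruct k as [|k]; [lia|]. simpl.
    replace (mult (RtoC 0) (pow_n (RtoC 0) k)) with (zero : C_Ring).
    + exact (scal_zero_l (d (S k))).
    + symmetry. apply (mult_zero_l (K:=C_Ring)). }
  rewrite (filterlim_locally_unique _ _ _ H H0). simpl. apply scal_one.
Qed.

Lemma Series_zero : Series (fun _ : nat => 0) = 0.
Proof.
  apply is_series_unique.
  exact (is_series_single (K:=R_AbsRing) (fun _ : nat => 0) 0%nat (fun _ _ => eq_refl)).
Qed.

Lemma H2_lower beta d : (forall k, 0 < beta k) -> in_H2 beta d ->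
  (Cmod (d 0%nat))^2 * beta 0%nat <= (H2norm beta d)^2.
Proof.
  intros Hb Hd. unfold H2norm, in_H2 in *.
  assert (Hnn : forall k, 0 <= Cmod (d k) ^ 2 * beta k).
  { intros k. apply Rmult_le_pos; [apply pow2_ge_0 | left; apply Hb]. }
  rewrite Series_incr_1 by exact Hd.
  assert (H1 : 0 <= Series (fun k => Cmod (d (S k)) ^ 2 * beta (S k))).
  { rewrite <- Series_zero. apply Series_le.
    - intros k. split; [lra|apply Hnn].
    - apply (ex_series_incr_1 (fun k => Cmod (d k) ^ 2 * beta k)). exact Hd. }
  rewrite pow2_sqrt.
  - lra.
  - specialize (Hnn 0%nat). lra.
Qed.

Fixpoint iterT (a : C) (k : nat) (z : C) : C :=
  match k with O => z | S k => iterT a k (Ta a z) end.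

Lemma iterT_S a k z : iterT a (S k) z = Ta a (iterT a k z).
Proof. revert z; induction k; intros z; [reflexivity|]. simpl in *. apply IHk. Qed.

Lemma pow_n_RtoC (x : R) n : pow_n (K:=C_Ring) (RtoC x) n = RtoC (x ^ n).
Proof.
  induction n; [reflexivity|]. simpl. rewrite IHn. rewrite RtoC_mult. reflexivity.
Qed.

Lemma Ta_real a x : 0 <= a < 1 -> 0 <= x ->
  Ta (RtoC a) (RtoC x) = RtoC ((a + x) / (1 + a * x)).
Proof.
  intros Ha Hx. unfold Ta.
  replace (Cconj (RtoC a)) with (RtoC a).
  2:{ unfold Cconj, RtoC; simpl. f_equal. ring. }
  rewrite <- RtoC_mult, <- !RtoC_plus, <- RtoC_div. reflexivity.
  assert (0 <= a * x) by (apply Rmult_le_pos; lra). lra.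
Qed.

Definition xs (lam : R) (k : nat) := (lam ^ k - 1) / (lam ^ k + 1).

Lemma iter_val a k : 0 < a < 1 ->
  iterT (RtoC a) k (RtoC 0) = RtoC (xs ((1 + a) / (1 - a)) k).
Proof.
  intros Ha. set (lam := (1 + a) / (1 - a)).
  assert (Hl : 1 <= lam).
  { unfold lam. apply (Rmult_le_reg_r (1 - a)); [lra|].
    field_simplify; lra. }
  induction k.
  - unfold xs. simpl. f_equal. field.
  - rewrite iterT_S, IHk.
    assert (HL : 1 <= lam ^ k) by (apply pow_R1_Rle; lra).
    assert (Hx : 0 <= xs lam k).
    { unfold xs. apply Rmult_le_pos; [lra|]. left; apply Rinv_0_lt_compat; lra. }
    rewrite Ta_real by lra. f_equal.
    unfold xs, lam. simpl. set (L := lam ^ k). fold lam. fold L.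
    unfold lam. field. split; [lra|]. unfold L. split; nra.
Qed.

Lemma key_ineq beta a M n : (forall k, 0 < beta k) -> 0 < a < 1 ->
  (forall c f, in_H2 beta c -> represents c f ->
    exists d, in_H2 beta d /\ represents d (fun z => f (Ta (RtoC a) z)) /\
      H2norm beta d <= M * H2norm beta c) ->
  forall k, (xs ((1 + a) / (1 - a)) k ^ n) ^ 2 * beta 0%nat
            <= (Rmax M 1 ^ k) ^ 2 * beta n.
Proof.
  intros Hb Ha H.
  set (M' := Rmax M 1).
  assert (HM' : 1 <= M') by apply Rmax_r.
  assert (Hex : forall k, exists d, in_H2 beta d /\
     represents d (fun z => pow_n (iterT (RtoC a) k z) n) /\
     H2norm beta d <= M' ^ k * sqrt (beta n)).
  { induction k.
    - exists (ind n). split; [|split].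
      + exists (beta n). apply H2_ind.
      + apply represents_ind.
      + unfold H2norm. rewrite (is_series_unique _ _ (H2_ind beta n)). simpl; lra.
    - destruct IHk as [d [Hd1 [Hd2 Hd3]]].
      destruct (H d _ Hd1 Hd2) as [d' [H1 [H2 H3]]].
      exists d'. split; [exact H1|]. split; [exact H2|].
      assert (0 <= H2norm beta d) by apply sqrt_pos.
      assert (M * H2norm beta d <= M' * H2norm beta d).
      { apply Rmult_le_compat_r; [lra|apply Rmax_l]. }
      simpl.
      assert (M' * H2norm beta d <= M' * (M' ^ k * sqrt (beta n))).
      { apply Rmult_le_compat_l; lra. }
      lra. }
  intros k. destruct (Hex k) as [d [Hd1 [Hd2 Hd3]]].
  assert (Hz : Cmod (RtoC 0) < 1) by (rewrite Cmod_0; lra).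
  pose proof (pseries_at_0 d _ (Hd2 _ Hz)) as H0.
  rewrite iter_val, pow_n_RtoC in H0 by lra.
  pose proof (H2_lower beta d Hb Hd1) as HL.
  rewrite <- H0, Cmod_R, pow2_abs in HL.
  eapply Rle_trans; [exact HL|].
  assert (0 <= H2norm beta d) by apply sqrt_pos.
  replace ((M' ^ k) ^ 2 * beta n) with ((M' ^ k * sqrt (beta n)) ^ 2).
  - apply pow_incr; lra.
  - rewrite Rpow_mult_distr, pow2_sqrt; [ring| left; apply Hb].
Qed.

From Stdlib Require Import ZArith.

Lemma bernoulli h m : -1 <= h -> 1 + INR m * h <= (1 + h) ^ m.
Proof.
  intros Hh. induction m.
  - simpl. lra.
  - rewrite S_INR. simpl.
    assert (0 <= INR m) by apply pos_INR.
    assert (0 <= INR m * h * h) by (rewrite Rmult_assoc; apply Rmult_le_pos; [lra| apply Rle_0_sqr]).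
    nra.
Qed.

Lemma ln_ge0 x : 1 <= x -> 0 <= ln x.
Proof.
  intros H. destruct (Req_dec x 1) as [->|Hn]; [rewrite ln_1; lra|].
  rewrite <- ln_1. left. apply ln_increasing; lra.
Qed.

Lemma final_step (beta : nat -> R) (lam M b0 : R) :
  1 < lam -> 1 <= M -> 0 < b0 -> (forall n, 0 < beta n) ->
  (forall n k, (xs lam k ^ n) ^ 2 * b0 <= (M ^ k) ^ 2 * beta n) ->
  poly_minoration beta.
Proof.
  intros Hl HM Hb0 Hb H.
  set (c := ln (M ^ 2) / ln lam).
  assert (Hlnl : 0 < ln lam) by (rewrite <- ln_1; apply ln_increasing; lra).
  assert (HM2 : 1 <= M ^ 2) by (apply pow_R1_Rle; lra).
  assert (Hc : 0 <= c).
  { unfold c. apply Rmult_le_pos; [apply ln_ge0; lra|left; apply Rinv_0_lt_compat; lra]. }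
  assert (HR8 : 0 < Rpower 8 c) by (unfold Rpower; apply exp_pos).
  exists ((9/16) * b0 / (M ^ 2 * Rpower 8 c)), (c + 1).
  split; [apply Rdiv_lt_0_compat; nra|]. split; [lra|].
  intros n Hn.
  set (N := INR n).
  assert (HN : 1 <= N) by (unfold N; apply (le_INR 1); exact Hn).
  set (r := ln (8 * N) / ln lam).
  assert (Hr : 0 < r).
  { unfold r. apply Rdiv_lt_0_compat; [|lra]. rewrite <- ln_1. apply ln_increasing; lra. }
  destruct (archimed r) as [Hu1 Hu2].
  assert (Hup : (0 <= up r)%Z) by (apply le_IZR; lra).
  set (k := Z.to_nat (up r)).
  assert (HK : INR k = IZR (up r)).
  { unfold k. rewrite INR_IZR_INZ, Z2Nat.id; auto. }
  assert (HL : 8 * N <= lam ^ k).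
  { rewrite <- Rpower_pow by lra. rewrite HK. unfold Rpower.
    rewrite <- (exp_ln (8 * N)) at 1 by lra. left. apply exp_increasing.
    replace (ln (8 * N)) with (r * ln lam) by (unfold r; field; lra).
    apply Rmult_lt_compat_r; lra. }
  set (y := 1 - / (4 * N)).
  assert (Hi : / (4 * N) * (4 * N) = 1) by (field; lra).
  assert (Hipos : 0 < / (4 * N)) by (apply Rinv_0_lt_compat; lra).
  assert (Hxy : y <= xs lam k).
  { unfold xs, Rdiv. set (L := lam ^ k) in *.
    assert (0 < / (L + 1)) by (apply Rinv_0_lt_compat; lra).
    assert (Hj : / (L + 1) * (L + 1) = 1) by (field; lra).
    apply (Rmult_le_reg_r (L + 1)); [lra|].
    rewrite Rmult_assoc, Hj, Rmult_1_r.
    unfold y. nra. }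
  assert (Hy0 : 0 <= y) by (unfold y; nra).
  assert (Hyn : 3 / 4 <= y ^ n).
  { pose proof (bernoulli (- / (4 * N)) n) as B.
    unfold y. replace (1 - / (4 * N)) with (1 + - / (4 * N)) by ring.
    eapply Rle_trans; [|apply B; nra]. fold N. nra. }
  assert (Hxn : 3 / 4 <= xs lam k ^ n).
  { eapply Rle_trans; [exact Hyn|]. apply pow_incr; lra. }
  assert (Hsq : 9 / 16 <= (xs lam k ^ n) ^ 2) by nra.
  assert (HMk : (M ^ k) ^ 2 <= M ^ 2 * Rpower 8 c * Rpower N c).
  { rewrite <- pow_mult, Nat.mul_comm, pow_mult.
    rewrite <- Rpower_pow by lra. rewrite HK.
    apply Rle_trans with (Rpower (M ^ 2) (r + 1)).
    - apply Rle_Rpower; lra.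
    - rewrite Rpower_plus, Rpower_1 by lra.
      replace (Rpower (M ^ 2) r) with (Rpower 8 c * Rpower N c).
      + lra.
      + rewrite Rpower_mult_distr by lra.
        unfold Rpower, c, r. f_equal. field. lra. }
  assert (HRN : 0 < Rpower N c) by (unfold Rpower; apply exp_pos).
  assert (Hmain : 9 / 16 * b0 <= (M ^ 2 * Rpower 8 c * Rpower N c) * beta n).
  { specialize (H n k). specialize (Hb n).
    apply Rle_trans with ((xs lam k ^ n) ^ 2 * b0); [nra|].
    eapply Rle_trans; [exact H|]. apply Rmult_le_compat_r; lra. }
  apply Rle_ge.
  apply Rle_trans with (9 / 16 * b0 / (M ^ 2 * Rpower 8 c) * Rpower N (- c)).
  - apply Rmult_le_compat_l.
    + left. apply Rdiv_lt_0_compat; nra.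
    + apply Rle_Rpower; lra.
  - rewrite Rpower_Ropp.
    assert (HP : 0 < M ^ 2 * Rpower 8 c * Rpower N c) by (repeat apply Rmult_lt_0_compat; lra).
    replace (9 / 16 * b0 / (M ^ 2 * Rpower 8 c) * / Rpower N c)
      with (9 / 16 * b0 / (M ^ 2 * Rpower 8 c * Rpower N c)) by (field; nra).
    apply (Rmult_le_reg_r (M ^ 2 * Rpower 8 c * Rpower N c)); [exact HP|].
    unfold Rdiv. rewrite Rmult_assoc, Rinv_l by lra. lra.
Qed.

Theorem mainTheorem3 (beta : nat -> R) :
  (forall n : nat, 0 < beta n) ->
  Rbar_le (Finite 1)
    (LimInf_seq (fun n : nat => Rpower (beta (S n)) (/ INR (S n)))) ->
  (exists a : R, 0 < a < 1 /\ bounded_comp_Ta beta (RtoC a)) ->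
  poly_minoration beta.
Proof.
  intros Hb _ [a [Ha [M HM]]].
  apply (final_step beta ((1 + a) / (1 - a)) (Rmax M 1) (beta 0%nat)).
  - apply (Rmult_lt_reg_r (1 - a)); [lra|]. field_simplify; lra.
  - apply Rmax_r.
  - apply Hb.
  - exact Hb.
  - intros n k. apply (key_ineq beta a M n Hb Ha HM).
Qed.
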